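(* Let $0<s<1$ and $M\in\mathbb R\setminus\{0\}$. For $n\ge1$ let $\mu_n^1$ be the unique real root of $\mu^3+\rho_n\mu-M\rho_n=0$. Then $$\frac{|M|}{\frac{M^2}{\rho_1}+1}\le|\mu_n^1|<|M|\qquad\text{for all }n\ge1.$$ Moreover, if $\frac12<s<1$, the sequence $(|\mu_n^1|)_{n\ge1}$ is (strictly) increasing.
   Context: $(-d_x^2)^s$ denotes the fractional Laplacian $C_s\,\mathrm{P.V.}\int_{\mathbb R}\frac{u(x)-u(y)}{|x-y|^{1+2s}}dy$; $0<\rho_1\le\rho_2\le\cdots\to\infty$ are the eigenvalues (with multiplicity) of its realization on $L^2(-1,1)$ with zero exterior Dirichlet condition ($u=0$ on $\mathbb R\setminus(-1,1)$), i.e. the self-adjoint operator associated with the form $\frac{C_s}{2}\iint\frac{(u(x)-u(y))(v(x)-v(y))}{|x-y|^{1+2s}}dxdy$ on $\{u\in H^s(\mathbb R):u=0\text{ outside }(-1,1)\}$. Standing fact used: for $\frac12<s<1$ these eigenvalues are simple. *)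

(* Defs.v *)
From Stdlib Require Import Reals Lra.
Open Scope R_scope.

(* The Dirichlet eigenvalues 0 < rho_1 <= rho_2 <= ... -> oo of the fractional
   Laplacian (-d_x^2)^s on (-1,1) cannot be constructed in Stdlib (no Lebesgue
   integration / fractional Sobolev spaces).  We therefore record, as an
   abstract interface, exactly the properties of this sequence that the
   context fixes: positivity, monotonicity (eigenvalues listed with
   multiplicity, increasingly), divergence to +oo, and the standing fact that
   for 1/2 < s < 1 the eigenvalues are simple (hence strictly increasing).
   Indexing is 1-based: rho 1 is the first eigenvalue; rho 0 is unused. *)
Definition frac_dirichlet_eigenvalues (s : R) (rho : nat -> R) : Prop :=
  (forall n, (1 <= n)%nat -> 0 < rho n) /\
  (forall n, (1 <= n)%nat -> rho n <= rho (S n)) /\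
  (forall K, exists N, forall n, (N <= n)%nat -> K < rho n) /\
  (1/2 < s -> forall n, (1 <= n)%nat -> rho n < rho (S n)).

(* Main.v *)
Require Import Defs.
From Stdlib Require Import Reals Lra Lia Psatz.
Open Scope R_scope.

Lemma key (M r x : R) : 0 < M -> 0 < r -> x^3 + r*x - M*r = 0 ->
  0 < x < M /\ M*r/(M^2+r) <= x.
Proof.
  intros HM Hr E.
  assert (Hx : 0 < x).
  { destruct (Rle_lt_dec x 0) as [h|h]; [|lra].
    assert (x^3 <= 0) by (simpl; nra). nra. }
  assert (HxM : x < M).
  { assert (0 < x^3) by (apply pow_lt; lra). nra. }
  split; [lra|].
  apply Rmult_le_reg_r with (M^2+r). nra.
  unfold Rdiv; rewrite Rmult_assoc, Rinv_l by nra.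
  assert (x^2 < M^2) by (simpl; nra).
  simpl in *. nra.
Qed.

Lemma mono (M r r' x x' : R) : 0 < M -> 0 < r -> r < r' ->
  x^3 + r*x - M*r = 0 -> x'^3 + r'*x' - M*r' = 0 -> x < x'.
Proof.
  intros HM Hr Hrr E E'.
  destruct (key M r x HM Hr E) as [[Hx _] _].
  destruct (key M r' x' HM (Rlt_trans _ _ _ Hr Hrr) E') as [[Hx' _] _].
  destruct (Rlt_le_dec x x') as [h|h]; [exact h|exfalso].
  assert (x'^3 <= x^3) by (apply pow_incr; lra).
  assert (0 < x^3) by (apply pow_lt; lra). assert (x'^3 * r < x^3 * r') by nra.
  assert (x'^3*r + r*r'*x' = x^3*r' + r*r'*x) by nra.
  assert (r*r'*x' <= r*r'*x) by (apply Rmult_le_compat_l; nra). lra.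
Qed.

Lemma lb (M r r1 x : R) : 0 < M -> 0 < r1 -> r1 <= r -> x^3 + r*x - M*r = 0 ->
  M / (M^2/r1 + 1) <= x < M.
Proof.
  intros HM Hr1 Hr E.
  destruct (key M r x HM (Rlt_le_trans _ _ _ Hr1 Hr) E) as [H1 H2].
  split; [|lra].
  eapply Rle_trans; [|exact H2].
  replace (M / (M^2/r1+1)) with (M*r1/(M^2+r1)) by (field; nra).
  unfold Rdiv. apply Rmult_le_reg_r with ((M^2+r1)*(M^2+r)). nra.
  replace (M * r1 * / (M ^ 2 + r1) * ((M ^ 2 + r1) * (M ^ 2 + r))) with (M*r1*(M^2+r)) by (field; nra).
  replace (M * r * / (M ^ 2 + r) * ((M ^ 2 + r1) * (M ^ 2 + r))) with (M*r*(M^2+r1)) by (field; nra).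
  assert (0 <= M^3*(r-r1)) by (apply Rmult_le_pos; [apply pow_le|]; lra). simpl in *. nra.
Qed.

Theorem lemma3p3 (s M : R) (rho mu : nat -> R)
  (hs : 0 < s < 1) (hM : M <> 0)
  (hrho : frac_dirichlet_eigenvalues s rho)
  (hmu : forall n, (1 <= n)%nat -> mu n ^ 3 + rho n * mu n - M * rho n = 0) :
  (forall n, (1 <= n)%nat ->
     Rabs M / (M ^ 2 / rho 1%nat + 1) <= Rabs (mu n) < Rabs M) /\
  (1/2 < s -> forall n, (1 <= n)%nat -> Rabs (mu n) < Rabs (mu (S n))).
Proof.
  destruct hrho as [Hpos [Hmon [_ Hstr]]].
  assert (Hge : forall n, (1 <= n)%nat -> rho 1%nat <= rho n).
  { induction n as [|n IH]; intros Hn; [lia|].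
    destruct (Nat.eq_dec n 0) as [->|Hn0]; [lra|].
    eapply Rle_trans; [apply IH; lia|apply Hmon; lia]. }
  assert (Hr1 : 0 < rho 1%nat) by (apply Hpos; lia).
  destruct (Rlt_le_dec 0 M) as [HMp|HMn].
  - assert (Hsg : forall n, (1 <= n)%nat -> 0 < mu n).
    { intros n Hn. destruct (key M (rho n) (mu n) HMp (Hpos n Hn) (hmu n Hn)); lra. }
    rewrite (Rabs_right M) by lra.
    split.
    + intros n Hn. rewrite Rabs_right by (specialize (Hsg n Hn); lra).
      apply (lb M (rho n) (rho 1%nat)); auto.
    + intros Hs n Hn. pose proof (Hsg n Hn); pose proof (Hsg (S n) ltac:(lia)). rewrite (Rabs_right (mu n)), (Rabs_right (mu (S n))) by lra.
      apply (mono M (rho n) (rho (S n))); auto; apply hmu; lia.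
  - assert (HMm : 0 < - M) by lra.
    assert (hmu' : forall n, (1 <= n)%nat -> (- mu n) ^ 3 + rho n * (- mu n) - (- M) * rho n = 0).
    { intros n Hn. specialize (hmu n Hn). simpl in *. lra. }
    assert (Hsg : forall n, (1 <= n)%nat -> 0 < - mu n).
    { intros n Hn. destruct (key (-M) (rho n) (- mu n) HMm (Hpos n Hn) (hmu' n Hn)); lra. }
    rewrite (Rabs_left1 M) by lra.
    split.
    + intros n Hn. rewrite Rabs_left1 by (specialize (Hsg n Hn); lra).
      replace (M^2) with ((-M)^2) by ring.
      apply (lb (-M) (rho n) (rho 1%nat)); auto.
    + intros Hs n Hn. pose proof (Hsg n Hn); pose proof (Hsg (S n) ltac:(lia)). rewrite (Rabs_left1 (mu n)), (Rabs_left1 (mu (S n))) by lra.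
      apply (mono (-M) (rho n) (rho (S n))); auto; apply hmu'; lia.
Qed.
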